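(* Let $p$ be a prime, let $e\geq2$ and $d\geq2$ be integers and let $\lambda\in\{1,\dots,\min(e,d-1)\}$. The map $$(\alpha_1,\dots,\alpha_d)\longmapsto (p^{\mu-\alpha_1},\dots,p^{\mu-\alpha_d}),\qquad \mu=\Big\lfloor \big(e+\textstyle\sum_{i=1}^d\alpha_i\big)/d\Big\rfloor=\big(e-\lambda+\textstyle\sum_{i=1}^d\alpha_i\big)/d,$$ is a bijection from $\mathcal R_\lambda(d,e)$ onto the set of $d$-dimensional vector-factorisations of $p^{e-\lambda}$. Its inverse is $(p^{\beta_1},\dots,p^{\beta_d})\longmapsto(B-\beta_1,\dots,B-\beta_d)$ where $B=\max(\beta_1,\dots,\beta_d)$.
   Context: $\mathbb N=\{0,1,2,\dots\}$. A $d$-dimensional vector-factorisation of $N\geq1$ is a vector $(v_1,\dots,v_d)\in\mathbb N^d$ with $v_1\cdots v_d=N$. $\mathcal R_\lambda(d,e)$ is the set of all $\alpha=(\alpha_1,\dots,\alpha_d)\in\mathbb N^d$ with $\min(\alpha_1,\dots,\alpha_d)=0$, $\max(\alpha_1,\dots,\alpha_d)\,d<e+\sum_i\alpha_i$ and $e+\sum_i\alpha_i\equiv\lambda\pmod d$. *)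

(* Defs.v *)
From mathcomp Require Import all_boot.
Set Implicit Arguments. Unset Strict Implicit. Unset Printing Implicit Defensive.

Definition vsum (d : nat) (a : {ffun 'I_d -> nat}) : nat := \sum_(i < d) a i.
Definition vmax (d : nat) (a : {ffun 'I_d -> nat}) : nat := \max_(i < d) a i.

(* min(a_1,...,a_d) = 0  <=>  some coordinate is 0 (entries are in N) *)
Definition inR (d e lam : nat) (a : {ffun 'I_d -> nat}) : bool :=
  [&& [exists i, a i == 0],
      vmax a * d < e + vsum a &
      (e + vsum a) %% d == lam %% d].

Definition isVF (d N : nat) (v : {ffun 'I_d -> nat}) : bool :=
  \prod_(i < d) v i == N.

Definition mu (d e : nat) (a : {ffun 'I_d -> nat}) : nat := (e + vsum a) %/ d.

Definition fmap (p d e : nat) (a : {ffun 'I_d -> nat}) : {ffun 'I_d -> nat} :=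
  [ffun i => p ^ (mu e a - a i)].

Definition gmap (p d : nat) (v : {ffun 'I_d -> nat}) : {ffun 'I_d -> nat} :=
  [ffun i => (\max_(j < d) logn p (v j)) - logn p (v i)].

(* Main.v *)
Require Import Defs.
From mathcomp Require Import all_boot.
From mathcomp Require Import zify.

Lemma sum_sub_const d (c : nat) (F : 'I_d -> nat) :
  (forall i, F i <= c) -> \sum_(i < d) (c - F i) + \sum_(i < d) F i = d * c.
Proof.
move=> H; rewrite -big_split /=.
rewrite (eq_bigr (fun _ => c)); last by move=> i _; rewrite subnK.
by rewrite sum_nat_const card_ord.
Qed.

Lemma inR_facts d e lam (a : {ffun 'I_d -> nat}) :
  1 <= lam -> lam < d -> lam <= e -> inR e lam a ->
  [/\ e + vsum a = mu e a * d + lam, (forall i, a i <= mu e a) &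
      exists i, a i = 0].
Proof.
move=> l1 ld le /and3P [/existsP [i /eqP ai] hM hmod].
have hm : (e + vsum a) %% d = lam by rewrite (eqP hmod) modn_small.
have hq : e + vsum a = mu e a * d + lam by rewrite /mu {1}(divn_eq (e + vsum a) d) hm.
split => //; last by exists i.
move=> j; have : a j <= vmax a by apply: leq_bigmax.
move: hM; rewrite hq => hM hj.
have : vmax a < (mu e a).+1 by rewrite -(ltn_pmul2r (leq_ltn_trans _ ld) ); nia.
lia.
Qed.

Theorem proposition3p2 (p e d lam : nat) :
  prime p -> 2 <= e -> 2 <= d -> 1 <= lam <= minn e d.-1 ->
  [/\ (forall a : {ffun 'I_d -> nat}, inR e lam a ->
         (e + vsum a) %/ d = (e - lam + vsum a) %/ d /\ d %| e - lam + vsum a),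
      (forall a : {ffun 'I_d -> nat}, inR e lam a -> isVF (p ^ (e - lam)) (fmap p e a)),
      (forall v : {ffun 'I_d -> nat}, isVF (p ^ (e - lam)) v -> inR e lam (gmap p v)),
      (forall a : {ffun 'I_d -> nat}, inR e lam a -> gmap p (fmap p e a) = a) &
      (forall v : {ffun 'I_d -> nat}, isVF (p ^ (e - lam)) v -> fmap p e (gmap p v) = v)].
Proof.
move=> pp e2 d2 /andP [l1]; rewrite leq_min => /andP [le ld'].
have ld : lam < d by lia.
have p1 : 1 < p by apply: prime_gt1.
have d0 : 0 < d by lia.
have VF : forall v : {ffun 'I_d -> nat}, isVF (p ^ (e - lam)) v ->
   (forall i, v i = p ^ logn p (v i)) /\ \sum_(i < d) logn p (v i) = e - lam.
  move=> v /eqP hv.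
  have hi : forall i, v i = p ^ logn p (v i).
    move=> i; have : v i %| p ^ (e - lam) by rewrite -hv (bigD1 i) //= dvdn_mulr.
    by case/(dvdn_pfactor _ _ pp) => m _ ->; rewrite pfactorK.
  split => //; apply/eqP; rewrite -(eqn_exp2l _ _ p1) expn_sum -hv.
  by apply/eqP/eq_bigr => i _; rewrite -hi.
split.
- move=> a ha; have [hq _ _] := @inR_facts d e lam a l1 ld le ha.
  rewrite -/(mu e a).
  have -> : e - lam + vsum a = mu e a * d by lia.
  by rewrite mulnK // dvdn_mull.
- move=> a ha; have [hq hle _] := @inR_facts d e lam a l1 ld le ha.
  rewrite /isVF /fmap; apply/eqP.
  under eq_bigr => i _ do rewrite ffunE.
  rewrite -expn_sum; congr (_ ^ _).
  have E : \sum_(i < d) (mu e a - a i) = e - lam.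
    have := @sum_sub_const _ _ _ hle; move: hq; rewrite /vsum; lia.
  exact: E.
- move=> v hv; have [hi hs] := VF v hv.
  set b := fun i => logn p (v i).
  have cd : 0 < #|'I_d| by rewrite card_ord.
  have [i0 hi0] := eq_bigmax b cd.
  set B := \max_(j < d) b j in hi0.
  have hbB : forall i, b i <= B by move=> i; apply: leq_bigmax.
  have hsum := @sum_sub_const _ _ _ hbB.
  have hvs : vsum (gmap p v) = \sum_(i < d) (B - b i).
    by apply: eq_bigr => i _; rewrite ffunE.
  apply/and3P; split.
  + by apply/existsP; exists i0; rewrite ffunE -/B -/(b i0) hi0 subnn.
  + have : vmax (gmap p v) <= B.
      by apply/bigmax_leqP => i _; rewrite ffunE leq_subr.
    rewrite hvs; move: hs; rewrite -/(\sum_(i < d) b i); nia.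
  + rewrite hvs.
    have -> : e + \sum_(i < d) (B - b i) = B * d + lam.
      move: hs hsum; rewrite -/(\sum_(i < d) b i); lia.
    by rewrite modnMDl.
- move=> a ha; have [hq hle [i0 hi0]] := @inR_facts d e lam a l1 ld le ha.
  apply/ffunP => i; rewrite !ffunE.
  under eq_bigr => j _ do rewrite ffunE pfactorK //.
  rewrite pfactorK //.
  have -> : \max_(j < d) (mu e a - a j) = mu e a.
    apply/eqP; rewrite eqn_leq; apply/andP; split.
      by apply/bigmax_leqP => j _; rewrite leq_subr.
    by apply: leq_trans (leq_bigmax i0); rewrite hi0 subn0.
  by rewrite subKn.
- move=> v hv; have [hi hs] := VF v hv.
  set b := fun i => logn p (v i).
  set B := \max_(j < d) b j.
  have hbB : forall i, b i <= B by move=> i; apply: leq_bigmax.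
  have hsum := @sum_sub_const _ _ _ hbB.
  have hvs : vsum (gmap p v) = \sum_(i < d) (B - b i).
    by apply: eq_bigr => i _; rewrite ffunE.
  have hmu : mu e (gmap p v) = B.
    rewrite /mu hvs.
    have -> : e + \sum_(i < d) (B - b i) = B * d + lam.
      move: hs hsum; rewrite -/(\sum_(i < d) b i); lia.
    by rewrite divnMDl // divn_small // addn0.
  apply/ffunP => i; rewrite !ffunE hmu -/B -/(b i).
  by have := hbB i; rewrite (hi i) => h; congr (_ ^ _); rewrite -/(b i); lia.
Qed.
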